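(* For a second-countable well-filtered space $X$ the following are equivalent: (1) $X$ is locally compact. (2) $\mathsf{K}(X)$ is a continuous semilattice, and $\xi_X^\sigma:X\to\Sigma\,\mathsf{K}(X)$, $x\mapsto\uparrow x$, is continuous. (3) $\mathsf{K}(X)$ is a continuous semilattice, and $X$ has property Q. (4) $\mathsf{K}(X)$ is a continuous semilattice. (5) $X$ is core compact.
   Context: Spaces are $T_0$; specialization order $x\le y$ iff $x\in\overline{\{y\}}$; saturated = upper set. $\mathsf{K}(X)$ = nonempty compact saturated subsets ordered by reverse inclusion (suprema, when they exist, are intersections). Scott topology on a poset: upper sets $U$ such that every directed $D$ with existing supremum in $U$ meets $U$; $\Sigma Q$ is $Q$ with it. $a\ll b$ means for every directed $D$ with existing $\bigvee D\ge b$ some $d\in D$ has $d\ge a$; $\mathsf{K}(X)$ is a continuous semilattice if it is directed complete and each $K$ is the directed supremum of $\{L:L\ll K\}$. Well-filtered: for open $U$ and $\mathcal K\subseteq\mathsf{K}(X)$ filtered under inclusion, $\bigcap\mathcal K\subseteq U$ implies some $K\in\mathcal K$ lies in $U$. Property Q: $K_1\ll K_2$ iff $K_2\subseteq\operatorname{int}K_1$. Locally compact: neighborhood bases of compact sets. Core compact: open-set lattice is continuous. *)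

(* Defs.v *)
From Stdlib Require Import List.

Set Implicit Arguments.

Definition subset {X : Type} (A B : X -> Prop) : Prop := forall x, A x -> B x.

Record topology (X : Type) := Topology {
  is_open : (X -> Prop) -> Prop;
  open_full : is_open (fun _ => True);
  open_inter : forall U V, is_open U -> is_open V -> is_open (fun x => U x /\ V x);
  open_union : forall F : (X -> Prop) -> Prop,
      (forall U, F U -> is_open U) -> is_open (fun x => exists U, F U /\ U x)
}.

Arguments is_open {X} t U.

Section Topo.
Context {X : Type} (T : topology X).

Definition T0 : Prop :=
  forall x y, (forall U, is_open T U -> (U x <-> U y)) -> x = y.

Definition second_countable : Prop :=
  exists B : nat -> (X -> Prop),
    (forall n, is_open T (B n)) /\
    (forall U, is_open T U -> forall x, U x ->
        exists n, B n x /\ subset (B n) U).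

(* specialization order: x <= y iff x in closure {y} iff every open nbhd of x contains y *)
Definition spec_le (x y : X) : Prop := forall U, is_open T U -> U x -> U y.

Definition upset (x : X) : X -> Prop := fun y => spec_le x y.

Definition saturated (A : X -> Prop) : Prop := forall x y, A x -> spec_le x y -> A y.

Definition compact (K : X -> Prop) : Prop :=
  forall C : (X -> Prop) -> Prop,
    (forall U, C U -> is_open T U) ->
    subset K (fun x => exists U, C U /\ U x) ->
    exists l : list (X -> Prop),
      (forall U, In U l -> C U) /\ subset K (fun x => exists U, In U l /\ U x).

Definition interior (A : X -> Prop) : X -> Prop :=
  fun x => exists U, is_open T U /\ U x /\ subset U A.

Definition KX (K : X -> Prop) : Prop :=
  (exists x, K x) /\ compact K /\ saturated K.

Definition Kle (K1 K2 : X -> Prop) : Prop := subset K2 K1.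

(* directed subset of K(X) (w.r.t. reverse inclusion) = filtered under inclusion *)
Definition Kdirected (D : (X -> Prop) -> Prop) : Prop :=
  (forall K, D K -> KX K) /\ (exists K, D K) /\
  (forall K1 K2, D K1 -> D K2 -> exists K3, D K3 /\ Kle K1 K3 /\ Kle K2 K3).

Definition Ksup (D : (X -> Prop) -> Prop) (S : X -> Prop) : Prop :=
  KX S /\ (forall K, D K -> Kle K S) /\
  (forall L, KX L -> (forall K, D K -> Kle K L) -> Kle S L).

Definition Kway_below (K1 K2 : X -> Prop) : Prop :=
  forall D S, Kdirected D -> Ksup D S -> Kle K2 S -> exists d, D d /\ Kle K1 d.

Definition K_dcpo : Prop := forall D, Kdirected D -> exists S, Ksup D S.

Definition K_continuous : Prop :=
  K_dcpo /\
  forall K, KX K ->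
    let D := fun L => KX L /\ Kway_below L K in
    Kdirected D /\ Ksup D K.

Definition Kscott_open (U : (X -> Prop) -> Prop) : Prop :=
  (forall K, U K -> KX K) /\
  (forall K K', U K -> KX K' -> Kle K K' -> U K') /\
  (forall D S, Kdirected D -> Ksup D S -> U S -> exists d, D d /\ U d).

Definition xi_sigma_continuous : Prop :=
  forall U, Kscott_open U -> is_open T (fun x => U (upset x)).

Definition property_Q : Prop :=
  forall K1 K2, KX K1 -> KX K2 ->
    (Kway_below K1 K2 <-> subset K2 (interior K1)).

Definition well_filtered : Prop :=
  forall (U : X -> Prop) (F : (X -> Prop) -> Prop),
    is_open T U -> Kdirected F ->
    subset (fun x => forall K, F K -> K x) U ->
    exists K, F K /\ subset K U.

Definition locally_compact : Prop :=
  forall x U, is_open T U -> U x ->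
    exists K, compact K /\ interior K x /\ subset K U.

Definition Odirected (D : (X -> Prop) -> Prop) : Prop :=
  (forall V, D V -> is_open T V) /\ (exists V, D V) /\
  (forall V1 V2, D V1 -> D V2 -> exists V3, D V3 /\ subset V1 V3 /\ subset V2 V3).

Definition Oway_below (V U : X -> Prop) : Prop :=
  forall D, Odirected D -> subset U (fun x => exists W, D W /\ W x) ->
    exists W, D W /\ subset V W.

Definition core_compact : Prop :=
  forall U, is_open T U ->
    let D := fun V => is_open T V /\ Oway_below V U in
    Odirected D /\
    (forall x, U x <-> exists V, D V /\ V x).

End Topo.

(* Main.v *)
Require Import Defs.
From Stdlib Require Import Arith List Classical FunctionalExtensionality PropExtensionality ClassicalEpsilon Lia.

Section S.
Context {X : Type} (T : topology X).

Lemma open_ext (U V : X -> Prop) : is_open T U -> (forall x, U x <-> V x) -> is_open T V.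
Proof.
  intros HU H. replace V with U; auto.
  apply functional_extensionality; intro x; apply propositional_extensionality; auto.
Qed.

Lemma open_empty : is_open T (fun _ => False).
Proof.
  apply (open_ext (fun x => exists U, (fun _ : X -> Prop => False) U /\ U x)).
  - apply open_union; intros U [].
  - intros x; split; [intros [U [[] _]] | intros []].
Qed.

Lemma open_union2 U V : is_open T U -> is_open T V -> is_open T (fun x => U x \/ V x).
Proof.
  intros HU HV.
  apply (open_ext (fun x => exists W, (W = U \/ W = V) /\ W x)).
  - apply open_union; intros W [->| ->]; auto.
  - intros x; split.
    + intros [W [[->| ->] H]]; auto.
    + intros [H|H]; eauto.
Qed.

Lemma open_local (P : X -> Prop) :
  (forall x, P x -> exists V, is_open T V /\ V x /\ subset V P) -> is_open T P.
Proof.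
  intros H.
  apply (open_ext (fun x => exists V, (is_open T V /\ subset V P) /\ V x)).
  - apply open_union; intros V [? ?]; auto.
  - intros x; split.
    + intros [V [[_ HV] Hx]]; auto.
    + intros Px; destruct (H x Px) as [V [? [? ?]]]; eauto.
Qed.

Lemma interior_open A : is_open T (interior T A).
Proof.
  apply open_local. intros x [U [HU [Ux HUA]]]. exists U; repeat split; auto.
  intros y Uy; exists U; auto.
Qed.

Lemma interior_sub A : subset (interior T A) A.
Proof. intros x [U [_ [Ux H]]]; auto. Qed.

Lemma open_upper U x y : is_open T U -> U x -> spec_le T x y -> U y.
Proof. intros HU Ux H; apply H; auto. Qed.

Lemma spec_refl x : spec_le T x x.
Proof. intros U _ H; auto. Qed.

Lemma spec_trans x y z : spec_le T x y -> spec_le T y z -> spec_le T x z.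
Proof. intros H1 H2 U HU Ux; exact (H2 U HU (H1 U HU Ux)). Qed.

Lemma sat_sep K z : saturated T K -> ~ K z ->
  exists V, is_open T V /\ subset K V /\ ~ V z.
Proof.
  intros Hs Hz.
  exists (fun w => exists U, (is_open T U /\ ~ U z) /\ U w). split; [|split].
  - apply open_union; intros U [? ?]; auto.
  - intros y Ky. assert (~ spec_le T y z) as Hn by (intro H; apply Hz; eapply Hs; eauto).
    unfold spec_le in Hn.
    apply not_all_ex_not in Hn as [U Hn].
    apply imply_to_and in Hn as [HU Hn]. apply imply_to_and in Hn as [Uy Hn].
    exists U; auto.
  - intros [U [[_ H] H']]; auto.
Qed.

Lemma upset_KX x : KX T (upset T x).
Proof.
  split; [exists x; apply spec_refl|split].
  - intros C HC Hcov. destruct (Hcov x (spec_refl x)) as [U [CU Ux]].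
    exists (U :: nil); split.
    + intros V [<-|[]]; auto.
    + intros z Hz; exists U; split; [left; auto|]. apply Hz; auto.
  - intros y z H1 H2; eapply spec_trans; eauto.
Qed.

Lemma compact_up A : compact T A -> compact T (fun z => exists y, A y /\ spec_le T y z).
Proof.
  intros HA C HC Hcov.
  destruct (HA C HC) as [l [Hl Hlc]].
  - intros y Ay. apply Hcov. exists y; split; auto; apply spec_refl.
  - exists l; split; auto. intros z [y [Ay Hyz]].
    destruct (Hlc y Ay) as [U [InU Uy]]. exists U; split; auto.
    apply Hyz; auto.
Qed.

Lemma compact_empty : compact T (fun _ => False).
Proof. intros C _ _; exists nil; split; [intros _ []|intros _ []]. Qed.

Lemma compact_union2 A B : compact T A -> compact T B -> compact T (fun x => A x \/ B x).
Proof.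
  intros HA HB C HC Hcov.
  destruct (HA C HC) as [l1 [H1 H1c]]. { intros y Ay; apply Hcov; auto. }
  destruct (HB C HC) as [l2 [H2 H2c]]. { intros y Ay; apply Hcov; auto. }
  exists (l1 ++ l2); split.
  - intros U HU; apply in_app_or in HU as [?|?]; auto.
  - intros z [Az|Bz].
    + destruct (H1c z Az) as [U [? ?]]; exists U; split; auto; apply in_or_app; auto.
    + destruct (H2c z Bz) as [U [? ?]]; exists U; split; auto; apply in_or_app; auto.
Qed.

Lemma choice_nat (R : nat -> X -> Prop) : (forall n, exists y, R n y) -> exists f, forall n, R n (f n).
Proof.
  intros H. exists (fun n => proj1_sig (constructive_indefinite_description _ (H n))).
  intros n; exact (proj2_sig (constructive_indefinite_description _ (H n))).
Qed.

Lemma seq_compact (a : nat -> X) (i0 : nat) :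
  (forall V, is_open T V -> V (a i0) -> exists m, forall n, m <= n -> V (a n)) ->
  compact T (fun z => exists n, spec_le T (a n) z).
Proof.
  intros Ht C HC Hcov.
  destruct (Hcov (a i0)) as [U0 [CU0 U0a]]. { exists i0; apply spec_refl. }
  destruct (Ht U0 (HC _ CU0) U0a) as [m Hm].
  assert (Hl : forall m, exists l, (forall U, In U l -> C U) /\
             forall n, n < m -> exists U, In U l /\ U (a n)).
  { clear Hm. induction m0 as [|m0 IH].
    - exists nil; split; [intros _ []|intros n Hn; lia].
    - destruct IH as [l [Hl1 Hl2]].
      destruct (Hcov (a m0)) as [U1 [CU1 U1a]]. { exists m0; apply spec_refl. }
      exists (U1 :: l); split.
      + intros U [<-|HU]; auto.
      + intros n Hn. destruct (Nat.eq_dec n m0) as [->|Hne].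
        * exists U1; split; [left|]; auto.
        * destruct (Hl2 n ltac:(lia)) as [U [? ?]]; exists U; split; [right|]; auto. }
  destruct (Hl m) as [l [Hl1 Hl2]].
  exists (U0 :: l); split.
  - intros U [<-|HU]; auto.
  - intros z [n Hn]. destruct (le_lt_dec m n) as [Hle|Hlt].
    + exists U0; split; [left; auto|]. apply Hn; auto.
    + destruct (Hl2 n Hlt) as [U [? ?]]. exists U; split; [right; auto|]. apply Hn; auto.
Qed.

End S.

Section S2.
Context {X : Type} (T : topology X).
Hypothesis WF : well_filtered T.

Lemma wf_inter_KX F : Kdirected T F -> KX T (fun x => forall K, F K -> K x).
Proof.
  intros HF. destruct HF as [HK [[K0 FK0] Hdir]].
  split; [|split].
  - apply NNPP; intro Hne.
    destruct (WF (fun _ => False) F (open_empty T)) as [K [FK HKs]].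
    + split; [auto|split; eauto].
    + intros x Hx; apply Hne; eauto.
    + destruct (HK K FK) as [[x Kx] _]; exact (HKs x Kx).
  - intros C HC Hcov.
    destruct (WF (fun x => exists U, C U /\ U x) F) as [K [FK HKs]].
    + apply open_union; auto.
    + split; [auto|split; eauto].
    + auto.
    + destruct (HK K FK) as [_ [Kc _]].
      destruct (Kc C HC HKs) as [l [? Hl]]. exists l; split; auto.
      intros x Hx; apply Hl; apply Hx; auto.
  - intros x y Hx Hxy K FK. destruct (HK K FK) as [_ [_ Ks]]. apply (Ks x y); [exact (Hx K FK)|exact Hxy].
Qed.

Lemma wf_sup F : Kdirected T F -> Ksup T F (fun x => forall K, F K -> K x).
Proof.
  intros HF. split; [apply wf_inter_KX; auto|split].
  - intros K FK x Hx; apply Hx; auto.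
  - intros L _ HL x Lx K FK; apply (HL K FK); auto.
Qed.

Lemma sup_inter F S : Kdirected T F -> Ksup T F S ->
  subset (fun x => forall K, F K -> K x) S.
Proof.
  intros HF [_ [_ Hl]]. apply Hl; [apply wf_inter_KX; auto|].
  intros K FK x Hx; apply Hx; auto.
Qed.

Lemma int_wayb K1 K2 : subset K2 (interior T K1) -> Kway_below T K1 K2.
Proof.
  intros H D S HD HS HK2S.
  destruct (WF (interior T K1) D (interior_open T K1) HD) as [d [Dd Hd]].
  - intros x Hx. apply H, HK2S. apply (sup_inter D S HD HS); auto.
  - exists d; split; auto. intros x dx; apply (interior_sub T K1); apply Hd; auto.
Qed.

Hypothesis SC : second_countable T.

Lemma wayb_up_int L x : Kway_below T L (upset T x) -> interior T L x.
Proof.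
  intros Hw. apply NNPP; intro Hni.
  destruct SC as [B [HBo HB]].
  set (N := fun n y => forall i, i <= n -> B i x -> B i y).
  assert (HNo : forall n, is_open T (N n)).
  { induction n as [|n IH].
    - destruct (classic (B 0 x)) as [Hb|Hb].
      + apply (open_ext T (B 0)); auto. intros y; split.
        * intros By i Hi _. replace i with 0 by lia; auto.
        * intros Hy; apply Hy; auto.
      + apply (open_ext T (fun _ => True)); [apply open_full|]. intros y; split; auto.
        intros _ i Hi Bx. replace i with 0 in Bx by lia. contradiction.
    - destruct (classic (B (S n) x)) as [Hb|Hb].
      + apply (open_ext T (fun y => N n y /\ B (S n) y)); [apply open_inter; auto|].
        intros y; split.
        * intros [Hn Hb'] i Hi Bx. destruct (Nat.eq_dec i (S n)) as [->|]; auto.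
          apply Hn; auto; lia.
        * intros Hy; split; [intros i Hi Bx; apply Hy; auto; lia|apply Hy; auto].
      + apply (open_ext T (N n)); auto. intros y; split.
        * intros Hn i Hi Bx. destruct (Nat.eq_dec i (S n)) as [->|]; [contradiction|].
          apply Hn; auto; lia.
        * intros Hy i Hi Bx; apply Hy; auto. }
  assert (Hy : forall n, exists y, N n y /\ ~ L y).
  { intros n. apply NNPP; intro Hne. apply Hni. exists (N n); split; auto; split.
    - intros i _ Bx; auto.
    - intros y Ny. apply NNPP; intro; apply Hne; eauto. }
  destruct (choice_nat (fun n y => N n y /\ ~ L y) Hy) as [y Hyp].
  set (c := fun k n => match n with 0 => x | S n => y (n + k) end).
  set (Q := fun k z => exists n, spec_le T (c k n) z).
  assert (HQ : forall k, KX T (Q k)).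
  { intros k. split; [exists x, 0; apply spec_refl|split].
    - apply (seq_compact T (c k) 0). intros V HV Vx.
      destruct (HB V HV x Vx) as [m [Bm HmV]].
      exists (S m). intros [|n] Hn; [lia|]. simpl. apply HmV.
      apply (proj1 (Hyp (n + k))); auto; lia.
    - intros z w [n Hn] Hzw. exists n; eapply spec_trans; eauto. }
  set (F := fun L => exists k, L = Q k).
  assert (HF : Kdirected T F).
  { split; [intros K [k ->]; auto|split; [exists (Q 0), 0; auto|]].
    intros K1 K2 [k1 ->] [k2 ->]. exists (Q (max k1 k2)); split; [exists (max k1 k2); auto|].
    assert (Hmon : forall k1 k3, k1 <= k3 -> Kle (Q k1) (Q k3)).
    { intros a b Hab z [[|n] Hn].
      - exists 0; auto.
      - exists (S (n + b - a)). simpl. simpl in Hn.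
        replace (n + b - a + a) with (n + b) by lia; auto. }
    split; apply Hmon; lia. }
  destruct (Hw F _ HF (wf_sup F HF)) as [d [[k ->] Hd]].
  - intros z Hz U HU Ux.
    destruct (HB U HU x Ux) as [i [Bi HiU]].
    destruct (Hz (Q i) (ex_intro _ i eq_refl)) as [[|n] Hn].
    + apply Hn; auto.
    + apply Hn; auto. apply HiU. simpl. apply (proj1 (Hyp (n + i))); auto; lia.
  - apply (proj2 (Hyp k)). apply Hd. exists 1. apply spec_refl.
Qed.

Lemma wayb_int K1 K2 : saturated T K2 -> Kway_below T K1 K2 -> subset K2 (interior T K1).
Proof.
  intros Hs Hw z Kz. apply wayb_up_int.
  intros D S HD HS HSz. apply (Hw D S HD HS).
  intros w Sw. eapply Hs; eauto. apply HSz; auto.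
Qed.

Lemma PQ : property_Q T.
Proof.
  intros K1 K2 _ [_ [_ Hs]]; split; [apply wayb_int; auto|apply int_wayb].
Qed.

End S2.

Section S3.
Context {X : Type} (T : topology X).

Lemma LC1 : locally_compact T -> forall K U, compact T K -> is_open T U -> subset K U ->
  (exists x, K x) -> exists L, KX T L /\ subset K (interior T L) /\ subset L U.
Proof.
  intros LC K U Kc HU HKU [x0 Kx0].
  set (C := fun V => is_open T V /\ exists K', compact T K' /\ subset V K' /\ subset K' U).
  destruct (Kc C) as [l [Hl Hlc]].
  - intros V [? ?]; auto.
  - intros x Kx. destruct (LC x U HU (HKU x Kx)) as [K' [K'c [[V [HV [Vx VK']]] K'U]]].
    exists V; split; auto. split; auto. exists K'; auto.
  - assert (Hind : forall l, (forall V, In V l -> C V) -> exists K', compact T K' /\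
       (forall z, (exists V, In V l /\ V z) -> K' z) /\ subset K' U).
    { induction l0 as [|V l0 IH]; intros Hl0.
      - exists (fun _ => False); split; [apply compact_empty|split].
        + intros z [V [[] _]].
        + intros z [].
      - destruct IH as [K1 [K1c [K1l K1U]]]. { intros W HW; apply Hl0; right; auto. }
        destruct (Hl0 V (or_introl eq_refl)) as [_ [K2 [K2c [VK2 K2U]]]].
        exists (fun z => K2 z \/ K1 z); split; [apply compact_union2; auto|split].
        + intros z [W [[<-|HW] Wz]]; [left; apply VK2; auto|right; apply K1l; eauto].
        + intros z [?|?]; auto. }
    destruct (Hind l Hl) as [K' [K'c [K'l K'U]]].
    exists (fun z => exists y, K' y /\ spec_le T y z). split; [|split].
    + split; [|split].
      * exists x0, x0; split; [apply K'l, Hlc; auto|apply spec_refl].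
      * apply compact_up; auto.
      * intros a b [y [Ky Hya]] Hab. exists y; split; auto. eapply spec_trans; eauto.
    + intros z Kz. destruct (Hlc z Kz) as [V [InV Vz]].
      exists V; split; [apply (Hl V InV)|split; auto].
      intros w Vw. exists w; split; [apply K'l; eauto|apply spec_refl].
    + intros z [y [Ky Hyz]]. apply Hyz; auto.
Qed.

Hypothesis WF : well_filtered T.
Hypothesis SC : second_countable T.
Hypothesis LC : locally_compact T.

Lemma C1_4 : K_continuous T.
Proof.
  split.
  - intros D HD. exists (fun x => forall K, D K -> K x). apply wf_sup; auto.
  - intros K HK. cbv zeta.
    destruct HK as [[x0 Kx0] [Kc Ks]].
    assert (HKX : KX T K) by (split; [eauto|auto]).
    assert (Hmk : forall U, is_open T U -> subset K U ->
             exists L, (KX T L /\ Kway_below T L K) /\ subset L U).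
    { intros U HU HKU. destruct (LC1 LC K U Kc HU HKU (ex_intro _ x0 Kx0)) as [L [HL [HKL HLU]]].
      exists L; split; auto. split; auto. apply int_wayb; auto. }
    split; [split; [|split]|].
    + intros L [? ?]; auto.
    + destruct (Hmk (fun _ => True) (open_full T)) as [L [? _]]; [intros ? ?; auto|eauto].
    + intros L1 L2 [HL1 W1] [HL2 W2].
      pose proof (wayb_int T WF SC L1 K Ks W1) as I1.
      pose proof (wayb_int T WF SC L2 K Ks W2) as I2.
      destruct (Hmk (fun x => interior T L1 x /\ interior T L2 x)) as [L3 [HL3 HL3U]].
      * apply open_inter; apply interior_open.
      * intros z Kz; split; auto.
      * exists L3; split; auto. split; intros z L3z; apply (interior_sub T); apply HL3U; auto.
    + split; auto; split.
      * intros L [HL W]. intros z Kz. apply (interior_sub T).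
        apply (wayb_int T WF SC L K Ks W); auto.
      * intros L'' HL'' Hub z L''z. apply NNPP; intro Hz.
        destruct (sat_sep T K z Ks Hz) as [V [HV [HKV HVz]]].
        destruct (Hmk V HV HKV) as [L [HL HLV]].
        apply HVz, HLV, (Hub L HL); auto.
Qed.

Lemma C1_xi : xi_sigma_continuous T.
Proof.
  intros U [HUK [HUup HUd]].
  apply open_local. intros x Ux.
  destruct C1_4 as [_ Hc]. destruct (Hc (upset T x) (upset_KX T x)) as [HD HS].
  destruct (HUd _ _ HD HS Ux) as [L [[HL W] UL]].
  pose proof (wayb_int T WF SC L (upset T x) (proj2 (proj2 (upset_KX T x))) W) as I.
  exists (interior T L); split; [apply interior_open|split].
  - apply I, spec_refl.
  - intros y Iy. apply (HUup L); auto; [apply upset_KX|].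
    intros z Hyz. apply (interior_sub T). apply Hyz; auto. apply interior_open.
Qed.

End S3.

Section S4.
Context {X : Type} (T : topology X).
Hypothesis WF : well_filtered T.
Hypothesis SC : second_countable T.

Lemma C4_1 : K_continuous T -> locally_compact T.
Proof.
  intros [_ Hc] x U HU Ux.
  destruct (Hc (upset T x) (upset_KX T x)) as [HD HS]. cbv zeta in HD, HS.
  destruct (WF U _ HU HD) as [L [[HL W] HLU]].
  - intros z Hz. apply (sup_inter T WF _ _ HD HS) in Hz. apply Hz; auto.
  - exists L; split; [apply HL|split; auto].
    apply (wayb_up_int T WF SC); auto.
Qed.

End S4.

Section S5.
Context {X : Type} (T : topology X).

Lemma way_sub V U : is_open T U -> Oway_below T V U -> subset V U.
Proof.
  intros HU H. destruct (H (fun W => W = U)) as [W [-> ?]]; auto.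
  - split; [intros W ->; auto|split; [eauto|]].
    intros ? ? -> ->; exists U; split; auto; split; intros ? ?; auto.
  - intros z Uz; eauto.
Qed.

Lemma way_empty U : Oway_below T (fun _ => False) U.
Proof. intros D [_ [[W DW] _]] _. exists W; split; auto. intros _ []. Qed.

Lemma way_mono_l V V' U : subset V V' -> Oway_below T V' U -> Oway_below T V U.
Proof.
  intros H1 H2 D HD HU. destruct (H2 D HD HU) as [W [? ?]]. exists W; split; auto.
  intros z Vz; auto.
Qed.


Lemma way_mono_r V U U' : subset U U' -> Oway_below T V U -> Oway_below T V U'.
Proof.
  intros H1 H2 D HD HU. apply H2; auto. intros z Uz. apply HU; auto.
Qed.

Lemma way_union V1 V2 U : Oway_below T V1 U -> Oway_below T V2 U ->
  Oway_below T (fun x => V1 x \/ V2 x) U.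
Proof.
  intros H1 H2 D HD HU.
  destruct (H1 D HD HU) as [W1 [D1 S1]]. destruct (H2 D HD HU) as [W2 [D2 S2]].
  destruct HD as [_ [_ Hdir]]. destruct (Hdir W1 W2 D1 D2) as [W3 [D3 [S13 S23]]].
  exists W3; split; auto. intros z [?|?]; auto.
Qed.

Lemma dir_list D l : Odirected T D -> (forall W, In W l -> D W) ->
  exists W, D W /\ forall W', In W' l -> subset W' W.
Proof.
  intros HD. destruct HD as [_ [[W0 D0] Hdir]]. induction l as [|V l IH]; intros Hl.
  - exists W0; split; auto. intros _ [].
  - destruct IH as [W [DW HW]]. { intros; apply Hl; right; auto. }
    destruct (Hdir V W) as [W3 [D3 [S1 S2]]]; auto. { apply Hl; left; auto. }
    exists W3; split; auto. intros W' [<-|HW']; auto.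
    intros z Wz; apply S2, (HW W' HW'); auto.
Qed.

Lemma C1_5 : locally_compact T -> core_compact T.
Proof.
  intros LC U HU. cbv zeta. split; [split; [|split]|].
  - intros V [? ?]; auto.
  - exists (fun _ => False); split; [apply open_empty|apply way_empty].
  - intros V1 V2 [O1 W1] [O2 W2]. exists (fun x => V1 x \/ V2 x).
    split; [split; [apply open_union2; auto|apply way_union; auto]|split; intros z ?; auto].
  - intros x; split.
    + intros Ux. destruct (LC x U HU Ux) as [K [Kc [Kx KU]]].
      exists (interior T K); split; [split; [apply interior_open|]|auto].
      intros D HD HUD.
      destruct (Kc D) as [l [Hl Hlc]].
      * destruct HD as [? _]; auto.
      * intros z Kz; apply HUD, KU; auto.
      * destruct (dir_list D l HD Hl) as [W [DW HW]]. exists W; split; auto.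
        intros z Iz. apply (interior_sub T) in Iz. destruct (Hlc z Iz) as [V [InV Vz]].
        apply (HW V InV); auto.
    + intros [V [[HV W] Vx]]. apply (way_sub V U HU W); auto.
Qed.

End S5.

Section S6.
Context {X : Type} (T : topology X).
Hypothesis WF : well_filtered T.
Hypothesis SC : second_countable T.

Section HMsec.
Variable W : nat -> X -> Prop.
Hypothesis HWo : forall n, is_open T (W n).
Hypothesis HWw : forall n, Oway_below T (W (S n)) (W n).

Lemma W_dec m n : m <= n -> subset (W n) (W m).
Proof.
  induction 1; [intros z; auto|].
  intros z Hz. apply IHle. apply (way_sub T (W (S m0)) (W m0)); auto.
Qed.

Lemma HM O : is_open T O -> subset (fun z => forall n, W n z) O -> exists n, subset (W n) O.
Proof.
  intros HO HKO. apply NNPP; intro Hno.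
  destruct SC as [B [HBo HB]].
  set (good := fun G : X -> Prop => forall n, exists z, W n z /\ ~ G z).
  assert (gO : good O).
  { intros n. apply NNPP; intro H. apply Hno. exists n. intros z Wz.
    apply NNPP; intro Hz; apply H; eauto. }
  set (Gs := fix Gs (i : nat) : X -> Prop := match i with 0 => O
        | S i => fun z => Gs i z \/ (good (fun y => Gs i y \/ B i y) /\ B i z) end).
  assert (HGs : forall i, is_open T (Gs i) /\ good (Gs i)).
  { induction i as [|i [IHo IHg]]; [split; auto|].
    destruct (classic (good (fun y => Gs i y \/ B i y))) as [Hg|Hg].
    - assert (E : forall z, (Gs i z \/ B i z) <-> Gs (S i) z).
      { intros z; simpl; split; [intros [?|?]; auto|intros [?|[_ ?]]; auto]. }
      split.
      + apply (open_ext T (fun z => Gs i z \/ B i z)); auto. apply open_union2; auto.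
      + intros n; destruct (Hg n) as [z [? Hz]]; exists z; split; auto.
        rewrite <- E; auto.
    - assert (E : forall z, Gs i z <-> Gs (S i) z).
      { intros z; simpl; split; [auto|intros [?|[? _]]; [auto|contradiction]]. }
      split.
      + apply (open_ext T (Gs i)); auto.
      + intros n; destruct (IHg n) as [z [? Hz]]; exists z; split; auto.
        rewrite <- E; auto. }
  assert (Hmon : forall i j, i <= j -> subset (Gs i) (Gs j)).
  { induction 1; [intros z; auto|]. intros z Hz; simpl; left; auto. }
  set (Ginf := fun z => exists i, Gs i z).
  assert (gInf : good Ginf).
  { intros n. apply NNPP; intro H.
    assert (HWG : subset (W n) (fun z => exists G, (fun G => exists i, G = Gs i) G /\ G z)).
    { intros z Wz. apply NNPP; intro Hz. apply H. exists z; split; auto.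
      intros [i Gz]. apply Hz. exists (Gs i); eauto. }
    destruct (HWw n (fun G => exists i, G = Gs i)) as [G [[i ->] HG]]; auto.
    - split; [intros G [i ->]; apply HGs|split; [exists (Gs 0), 0; auto|]].
      intros G1 G2 [i ->] [j ->]. exists (Gs (max i j)); split; [eauto|].
      split; apply Hmon; lia.
    - destruct (proj2 (HGs i) (S n)) as [z [Wz Gz]]. apply Gz, HG; auto. }
  assert (Hkey : forall i z0, B i z0 -> ~ Ginf z0 ->
            exists m, forall z, W m z -> ~ Ginf z -> B i z).
  { intros i z0 Bz0 Gz0.
    assert (Hng : ~ good (fun y => Gs i y \/ B i y)).
    { intro Hg. apply Gz0. exists (S i). simpl. right; auto. }
    apply not_all_ex_not in Hng as [m Hm]. exists m. intros z Wz Gz.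
    destruct (classic (Gs i z \/ B i z)) as [[Hz|Hz]|Hz]; auto.
    - exfalso; apply Gz; exists i; auto.
    - exfalso; apply Hm; exists z; auto. }
  destruct (choice_nat (fun n z => W n z /\ ~ Ginf z) gInf) as [a Ha].
  assert (Htail : forall k V, is_open T V -> V (a k) -> exists m, forall n, m <= n -> V (a n)).
  { intros k V HV Va. destruct (HB V HV (a k) Va) as [i [Bi BiV]].
    destruct (Hkey i (a k) Bi (proj2 (Ha k))) as [m Hm].
    exists m; intros n Hn. apply BiV, Hm; [|apply Ha].
    apply (W_dec m n Hn), Ha. }
  set (Q := fun k z => exists n, spec_le T (a (n + k)) z).
  assert (HQ : forall k, KX T (Q k)).
  { intros k. split; [exists (a k), 0; apply spec_refl|split].
    - apply (seq_compact T (fun n => a (n + k)) 0). intros V HV Va.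
      destruct (Htail k V HV Va) as [m Hm]. exists m; intros n Hn; apply Hm; lia.
    - intros z w [n Hn] Hzw. exists n; eapply spec_trans; eauto. }
  set (F := fun L => exists k, L = Q k).
  assert (HF : Kdirected T F).
  { split; [intros K [k ->]; auto|split; [exists (Q 0), 0; auto|]].
    intros K1 K2 [k1 ->] [k2 ->]. exists (Q (max k1 k2)); split; [exists (max k1 k2); auto|].
    assert (Hm : forall k1 k3, k1 <= k3 -> Kle (Q k1) (Q k3)).
    { intros p q Hpq z [n Hn]. exists (n + q - p).
      replace (n + q - p + p) with (n + q) by lia; auto. }
    split; apply Hm; lia. }
  destruct (WF O F HO HF) as [L [[k ->] HL]].
  - intros z Hz. apply HKO. intros n.
    destruct (Hz (Q n) (ex_intro _ n eq_refl)) as [j Hj].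
    apply (Hj (W n) (HWo n)). apply (W_dec n (j + n)); [lia|apply Ha].
  - apply (proj2 (Ha k)). exists 0. apply HL. exists 0. apply spec_refl.
Qed.

Lemma HM_compact : compact T (fun z => forall n, W n z).
Proof.
  intros C HC Hcov.
  destruct (HM (fun x => exists U, C U /\ U x)) as [n Hn]; auto.
  { apply open_union; auto. }
  set (D := fun G => exists l, (forall U, In U l -> C U) /\
                   forall z, G z <-> exists U, In U l /\ U z).
  destruct (HWw n D) as [G [[l [Hl HG]] HWG]].
  - split; [|split].
    + intros G [l [Hl HG]]. apply (open_ext T (fun z => exists U, (fun U => In U l) U /\ U z)).
      * apply open_union. intros U HU; apply HC, Hl; auto.
      * intros z; split; [intros Hz; apply HG; exact Hz|intros Hz; apply HG in Hz; exact Hz].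
    + exists (fun _ => False), nil; split; [intros _ []|intros z; split; [intros []|intros [_ [[] _]]]].
    + intros G1 G2 [l1 [Hl1 HG1]] [l2 [Hl2 HG2]].
      exists (fun z => exists U, In U (l1 ++ l2) /\ U z); split; [|split].
      * exists (l1 ++ l2); split; [|tauto]. intros U HU; apply in_app_or in HU as [?|?]; auto.
      * intros z Hz; apply HG1 in Hz as [U [? ?]]; exists U; split; auto; apply in_or_app; auto.
      * intros z Hz; apply HG2 in Hz as [U [? ?]]; exists U; split; auto; apply in_or_app; auto.
  - intros z Wz. destruct (Hn z Wz) as [U [CU Uz]].
    exists (fun y => U y); split; auto. exists (U :: nil); split.
    + intros V [<-|[]]; auto.
    + intros y; split; [intros; exists U; split; [left|]; auto|intros [V [[<-|[]] ?]]; auto].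
  - exists l; split; auto. intros z Kz. apply HG, HWG, Kz.
Qed.

End HMsec.

Lemma interp : core_compact T -> forall V U, is_open T U -> Oway_below T V U ->
  exists W, is_open T W /\ Oway_below T V W /\ Oway_below T W U.
Proof.
  intros CC V U HU HVU.
  set (E := fun W' => exists W, is_open T W /\ Oway_below T W U /\ is_open T W' /\ Oway_below T W' W).
  destruct (HVU E) as [G [[W [HW [HWU [HG HGW]]]] HVG]].
  - split; [intros W' [W [? [? [? ?]]]]; auto|split].
    + exists (fun _ => False), (fun _ => False). repeat split; try apply open_empty; apply way_empty.
    + intros G1 G2 [W1 [O1 [U1 [P1 Q1]]]] [W2 [O2 [U2 [P2 Q2]]]].
      exists (fun x => G1 x \/ G2 x). split; [|split; intros z ?; auto].
      exists (fun x => W1 x \/ W2 x). repeat split.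
      * apply open_union2; auto.
      * apply way_union; auto.
      * apply open_union2; auto.
      * apply way_union; (eapply way_mono_r; [|eauto]); intros z ?; auto.
  - intros z Uz. destruct (CC U HU) as [_ H1]. destruct (proj1 (H1 z) Uz) as [W [[HW HWU] Wz]].
    destruct (CC W HW) as [_ H2]. destruct (proj1 (H2 z) Wz) as [W' [[HW' HW'W] W'z]].
    exists W'; split; auto. exists W; auto.
  - exists W; split; auto. split; auto. eapply way_mono_l; eauto.
Qed.

Lemma C5_1 : core_compact T -> locally_compact T.
Proof.
  intros CC x U HU Ux.
  destruct (CC U HU) as [_ H1]. destruct (proj1 (H1 x) Ux) as [V [[HV HVU] Vx]].
  set (f := fun W => epsilon (inhabits W)
              (fun W' => is_open T W' /\ Oway_below T V W' /\ Oway_below T W' W)).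
  set (sq := fun n => Nat.iter n f U).
  assert (Hsq : forall n, is_open T (sq n) /\ Oway_below T V (sq n)).
  { induction n as [|n [IHo IHw]]; [split; auto|].
    destruct (interp CC V (sq n) IHo IHw) as [W HW].
    pose proof (epsilon_spec (inhabits (sq n))
      (fun W' => is_open T W' /\ Oway_below T V W' /\ Oway_below T W' (sq n)) (ex_intro _ W HW)) as Hs.
    change (sq (S n)) with (f (sq n)). exact (conj (proj1 Hs) (proj1 (proj2 Hs))). }
  assert (Hsw : forall n, Oway_below T (sq (S n)) (sq n)).
  { intros n. destruct (interp CC V (sq n) (proj1 (Hsq n)) (proj2 (Hsq n))) as [W HW].
    pose proof (epsilon_spec (inhabits (sq n))
      (fun W' => is_open T W' /\ Oway_below T V W' /\ Oway_below T W' (sq n)) (ex_intro _ W HW)) as Hs.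
    change (sq (S n)) with (f (sq n)). exact (proj2 (proj2 Hs)). }
  exists (fun z => forall n, sq n z). split; [|split].
  - apply HM_compact; auto. intros n; apply Hsq.
  - exists V; split; auto; split; auto. intros z Vz n.
    apply (way_sub T V (sq n)); try apply Hsq; auto.
  - intros z Hz; apply (Hz 0).
Qed.

End S6.

Theorem mainTheorem17 (X : Type) (T : topology X) :
  T0 T -> second_countable T -> well_filtered T ->
  (locally_compact T <-> (K_continuous T /\ xi_sigma_continuous T)) /\
  ((K_continuous T /\ xi_sigma_continuous T) <-> (K_continuous T /\ property_Q T)) /\
  ((K_continuous T /\ property_Q T) <-> K_continuous T) /\
  (K_continuous T <-> core_compact T).
Proof.
  intros _ SC WF.
  pose proof (PQ T WF SC) as Hq.
  split; [|split; [|split]].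
  - split.
    + intros LC; split; [apply C1_4|apply C1_xi]; auto.
    + intros [Hk _]; apply C4_1; auto.
  - split.
    + intros [Hk _]; auto.
    + intros [Hk _]; split; auto. apply C1_xi; auto. apply C4_1; auto.
  - split; [intros [? _]; auto|intros; split; auto].
  - split.
    + intros Hk; apply C1_5, C4_1; auto.
    + intros Hc; apply C1_4; auto. apply C5_1; auto.
Qed.
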